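(* Let $\Lambda$ be a row-finite $k$-graph with no sources and let $\{t_\lambda\}_{\lambda\in\Lambda}$ be a permutative representation of $C^*(\Lambda)$ with index set $I$, sets $J_\lambda,K_\lambda$ and bijections $\tilde\sigma_\lambda:J_\lambda\to K_\lambda$, and let $E:I\to\Lambda^\infty$ be its encoding map. Then: (a) For each $i\in I$ and $n\in\mathbb N^k$ there are a unique $\lambda\in\Lambda^n$ and a unique $i_n\in J_\lambda$ with $\tilde\sigma_\lambda(i_n)=i$. Writing $\tilde\sigma^n(i):=i_n$, we have $\tilde\sigma_\lambda\circ\tilde\sigma^n(i)=i$ for all $i\in K_\lambda$ and $\tilde\sigma^n\circ\tilde\sigma_\lambda(i)=i$ for all $i\in J_\lambda$. (b) $\sigma_\lambda(E(i))=E(\tilde\sigma_\lambda(i))$ for all $\lambda\in\Lambda$ and $i\in J_\lambda$, and $\sigma^n(E(i))=E(\tilde\sigma^n(i))$ for all $n\in\mathbb N^k$ and $i\in I$.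
   Context: A $k$-graph ($k\ge1$) is a countable small category $\Lambda$ with a functor $d:\Lambda\to\mathbb N^k$ satisfying unique factorization: if $d(\lambda)=m+n$ there are unique $\mu,\nu$ with $\lambda=\mu\nu$, $d(\mu)=m$, $d(\nu)=n$. $\Lambda^0$ = vertices, $r,s$ = range, source, $\Lambda^n=d^{-1}(n)$, $v\Lambda^n=\{\lambda\in\Lambda^n:r(\lambda)=v\}$, $s(\lambda)\Lambda=\{\nu:r(\nu)=s(\lambda)\}$; row-finite: each $v\Lambda^n$ finite; no sources: each $v\Lambda^n$ nonempty. Infinite paths are degree-preserving functors $x:\Omega_k\to\Lambda$, where $\Omega_k$ has objects $\mathbb N^k$, morphisms $(p,q)$, $p\le q$, $d(p,q)=q-p$; $\Lambda^\infty$ is their set, $r(x)=x(0,0)$. Shift: $\sigma^m(x)(p,q)=x(p+m,q+m)$. Prefixing: for $r(x)=s(\lambda)$, $\sigma_\lambda(x)=\lambda x$ is the unique $y\in\Lambda^\infty$ with $y(0,d(\lambda))=\lambda$ and $\sigma^{d(\lambda)}(y)=x$. A representation of $C^*(\Lambda)$ is a family of partial isometries $\{t_\lambda\}$ satisfying (CK1) $\{t_v\}$ mutually orthogonal projections, (CK2) $t_\lambda t_\eta=t_{\lambda\eta}$ when $s(\lambda)=r(\eta)$, (CK3) $t_\lambda^*t_\lambda=t_{s(\lambda)}$, (CK4) $t_v=\sum_{\lambda\in v\Lambda^n}t_\lambda t_\lambda^*$. It is permutative if the Hilbert space has an orthonormal basis $\{e_i\}_{i\in I}$ such that for each $\lambda$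 there are $J_\lambda,K_\lambda\subseteq I$ and a bijection $\tilde\sigma_\lambda:J_\lambda\to K_\lambda$ with: (a) for each $n$, $\bigcup_{\lambda\in\Lambda^n}J_\lambda=\bigcup_{\lambda\in\Lambda^n}K_\lambda=I$; (b) for $\lambda\in\Lambda,\nu\in s(\lambda)\Lambda$: $K_\nu\subseteq J_\lambda$ and $\tilde\sigma_\lambda\circ\tilde\sigma_\nu=\tilde\sigma_{\lambda\nu}$; (c) $t_\lambda e_i=e_{\tilde\sigma_\lambda(i)}$ for $i\in J_\lambda$, $t_\lambda e_i=0$ otherwise; (d) $t_\lambda^*e_{\tilde\sigma_\lambda(i)}=e_i$ for $i\in J_\lambda$, and $t_\lambda^*e_j=0$ for $j\in K_{\lambda'}$ when $\lambda'\ne\lambda$, $d(\lambda')=d(\lambda)$. For such a representation the sets $K_\lambda$, $\lambda\in\Lambda^n$, partition $I$, and the encoding map $E:I\to\Lambda^\infty$ is the infinite path with $E(i)(0,n)=$ the unique $\lambda\in\Lambda^n$ with $i\in K_\lambda$. *)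

(* Defs.v *)
From HB Require Import structures.
From mathcomp Require Import all_boot all_order all_algebra.
From Stdlib Require Import ClassicalEpsilon.
Set Implicit Arguments. Unset Strict Implicit. Unset Printing Implicit Defensive.
Import Order.TTheory GRing.Theory Num.Theory.

Definition nk (k : nat) := {ffun 'I_k -> nat}.
Definition zk (k : nat) : nk k := [ffun => 0%N].
Definition addk k (m n : nk k) : nk k := [ffun i => (m i + n i)%N].
Definition subk k (q p : nk k) : nk k := [ffun i => (q i - p i)%N].
Definition lek k (m n : nk k) : bool := [forall i, (m i <= n i)%N].

(* A countable small category (objects kObj, morphisms kMor; composition
   kcomp l m = "l m", defined when ks l = kr m) with a degree functor
   kdeg into N^k satisfying the unique factorization property. *)
Record kgraph (k : nat) : Type := KGraph {
  kObj : countType;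
  kMor : countType;
  kr : kMor -> kObj;
  ks : kMor -> kObj;
  kid : kObj -> kMor;
  kcomp : kMor -> kMor -> kMor;
  kdeg : kMor -> nk k;
  kr_id : forall v, kr (kid v) = v;
  ks_id : forall v, ks (kid v) = v;
  kid_l : forall l, kcomp (kid (kr l)) l = l;
  kid_r : forall l, kcomp l (kid (ks l)) = l;
  kr_comp : forall l m, ks l = kr m -> kr (kcomp l m) = kr l;
  ks_comp : forall l m, ks l = kr m -> ks (kcomp l m) = ks m;
  kcompA : forall l m n, ks l = kr m -> ks m = kr n ->
      kcomp (kcomp l m) n = kcomp l (kcomp m n);
  kdeg_id : forall v, kdeg (kid v) = zk k;
  kdeg_comp : forall l m, ks l = kr m ->
      kdeg (kcomp l m) = addk (kdeg l) (kdeg m);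
  kfact : forall l (m n : nk k), kdeg l = addk m n ->
      exists! mn : kMor * kMor,
        [/\ ks mn.1 = kr mn.2, kcomp mn.1 mn.2 = l, kdeg mn.1 = m & kdeg mn.2 = n]
}.

Section KGraphDefs.
Variables (k : nat) (L : kgraph k).

Definition row_finite : Prop :=
  forall (v : kObj L) (n : nk k), exists s : seq (kMor L),
    uniq s /\ forall l, l \in s <-> (kr l = v /\ kdeg l = n).

Definition no_sources : Prop :=
  forall (v : kObj L) (n : nk k), exists l : kMor L, kr l = v /\ kdeg l = n.

(* An infinite path: a degree-preserving functor Omega_k -> Lambda, given by
   its values x p q on the morphisms (p,q), p <= q, of Omega_k
   (the values for p not <= q are irrelevant). The object map is p |-> x(p,p). *)
Definition inf_path (x : nk k -> nk k -> kMor L) : Prop :=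
  [/\ forall p q, lek p q -> kdeg (x p q) = subk q p,
      forall p, x p p = kid (kr (x p p)) &
      forall p q r, lek p q -> lek q r ->
        ks (x p q) = kr (x q r) /\ kcomp (x p q) (x q r) = x p r].

Definition path_eq (x y : nk k -> nk k -> kMor L) : Prop :=
  forall p q, lek p q -> x p q = y p q.

Definition path_range (x : nk k -> nk k -> kMor L) : kObj L := kr (x (zk k) (zk k)).

Definition path_shift (m : nk k) (x : nk k -> nk k -> kMor L) : nk k -> nk k -> kMor L :=
  fun p q => x (addk p m) (addk q m).

(* prefixing sigma_l x = l x : the unique infinite path y with
   y(0,d l) = l and sigma^{d l}(y) = x (chosen by epsilon) *)
Definition path_prefix (l : kMor L) (x : nk k -> nk k -> kMor L) : nk k -> nk k -> kMor L :=
  epsilon (inhabits x) (fun y => inf_path y /\ y (zk k) (kdeg l) = l /\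
                                 path_eq (path_shift (kdeg l) y) x).

End KGraphDefs.

Definition inner_product (C : numClosedFieldType) (H : lmodType C) (ip : H -> H -> C) : Prop :=
  [/\ forall a x y z, ip (a *: x + y) z = a * ip x z + ip y z,
      forall x y, ip x y = (ip y x)^*,
      forall x, 0 <= ip x x &
      forall x, ip x x = 0 -> x = 0]%R.

Definition orthonormal_basis (C : numClosedFieldType) (H : lmodType C)
    (ip : H -> H -> C) (I : Type) (e : I -> H) : Prop :=
  (forall i j, i = j -> ip (e i) (e j) = 1%R) /\
  (forall i j, i <> j -> ip (e i) (e j) = 0%R) /\
  (forall x, (forall i, ip x (e i) = 0%R) -> x = 0%R).

Definition lin_map (C : numClosedFieldType) (H : lmodType C) (f : H -> H) : Prop :=
  forall (a : C) (x y : H), f (a *: x + y)%R = (a *: f x + f y)%R.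

Definition ck_rep (k : nat) (L : kgraph k) (C : numClosedFieldType) (H : lmodType C)
    (ip : H -> H -> C) (t tstar : kMor L -> H -> H) : Prop :=
  (forall l, lin_map (t l) /\ lin_map (tstar l)) /\
  (forall l x y, ip (t l x) y = ip x (tstar l y)) /\
  (forall l x, t l (tstar l (t l x)) = t l x) /\
  [/\
      ((forall v x, t (kid v) (t (kid v) x) = t (kid v) x /\ tstar (kid v) x = t (kid v) x) /\
      (forall v w x, v <> w -> t (kid v) (t (kid w) x) = 0%R)),
      (forall l m x, ks l = kr m -> t (kcomp l m) x = t l (t m x)),
      (forall l x, tstar l (t l x) = t (kid (ks l)) x) &
      (forall v n (s : seq (kMor L)), uniq s ->
          (forall l, l \in s <-> (kr l = v /\ kdeg l = n)) ->
          forall x, t (kid v) x = (\sum_(l <- s) t l (tstar l x))%R)].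

Definition permutative (k : nat) (L : kgraph k) (C : numClosedFieldType) (H : lmodType C)
    (I : Type) (e : I -> H) (t tstar : kMor L -> H -> H)
    (J K : kMor L -> I -> Prop) (sig : kMor L -> I -> I) : Prop :=
  [/\
      (forall l, (forall i, J l i -> K l (sig l i)) /\
                 (forall i j, J l i -> J l j -> sig l i = sig l j -> i = j) /\
                 (forall j, K l j -> exists i, J l i /\ sig l i = j)),
      (forall n i, exists l, kdeg l = n /\ J l i) /\
      (forall n i, exists l, kdeg l = n /\ K l i),
      (forall l nu, kr nu = ks l ->
          (forall i, K nu i -> J l i) /\
          (forall i, J (kcomp l nu) i <-> J nu i) /\
          (forall i, J nu i -> sig l (sig nu i) = sig (kcomp l nu) i)),
      (forall l i, (J l i -> t l (e i) = e (sig l i)) /\ (~ J l i -> t l (e i) = 0%R)) &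
      (forall l i, J l i -> tstar l (e (sig l i)) = e i) /\
      (forall l l' j, l' <> l -> kdeg l' = kdeg l -> K l' j -> tstar l (e j) = 0%R)].

Definition encoding (k : nat) (L : kgraph k) (I : Type) (K : kMor L -> I -> Prop)
    (E : I -> nk k -> nk k -> kMor L) : Prop :=
  forall i, inf_path (E i) /\
    forall n, kdeg (E i (zk k) n) = n /\ K (E i (zk k) n) i.

Definition tsig_n (k : nat) (L : kgraph k) (I : Type) (J : kMor L -> I -> Prop)
    (sig : kMor L -> I -> I) (n : nk k) (i : I) : I :=
  epsilon (inhabits i) (fun j => exists l, kdeg l = n /\ J l j /\ sig l j = i).

(* Main.v *)
Require Import Defs.
From mathcomp Require Import all_boot all_order all_algebra.
From Stdlib Require Import ClassicalEpsilon.
Set Implicit Arguments. Unset Strict Implicit. Unset Printing Implicit Defensive.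
Import GRing.Theory.

Lemma addkC k (m n : nk k) : addk m n = addk n m.
Proof. by apply/ffunP=> x; rewrite !ffunE addnC. Qed.
Lemma add0k k (m : nk k) : addk (zk k) m = m.
Proof. by apply/ffunP=> x; rewrite !ffunE. Qed.
Lemma subkDD k (p q m : nk k) : subk (addk q m) (addk p m) = subk q p.
Proof. by apply/ffunP=> x; rewrite !ffunE subnDr. Qed.
Lemma lek0 k (p : nk k) : lek (zk k) p.
Proof. by apply/forallP => x; rewrite ffunE. Qed.
Lemma lekD k (p q m : nk k) : lek p q -> lek p (addk q m).
Proof. move/forallP=> h; apply/forallP=> x; rewrite ffunE; exact: leq_trans (h x) (leq_addr _ _). Qed.
Lemma lekDr k (p m : nk k) : lek p (addk p m).
Proof. by apply/forallP=> x; rewrite ffunE leq_addr. Qed.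
Lemma lekDl k (m r : nk k) : lek m (addk r m).
Proof. by apply/forallP=> x; rewrite ffunE leq_addl. Qed.
Lemma lekDD k (p q m : nk k) : lek p q -> lek (addk p m) (addk q m).
Proof. move/forallP=> h; apply/forallP=> x; rewrite !ffunE leq_add2r; exact: h. Qed.

Lemma fact_uniq k (L : kgraph k) (a b a' b' : kMor L) :
  ks a = kr b -> ks a' = kr b' -> kcomp a b = kcomp a' b' ->
  kdeg a = kdeg a' -> kdeg b = kdeg b' -> a = a' /\ b = b'.
Proof.
move=> h1 h2 h3 h4 h5.
have [[x y] [_ hu]] := kfact (kdeg_comp h1).
have e1 := hu (a,b) (And4 h1 erefl erefl erefl).
have e2 := hu (a',b') (And4 h2 (esym h3) (esym h4) (esym h5)).
by rewrite e1 in e2; case: e2.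
Qed.

Lemma path_eq_ext k (L : kgraph k) (y z : nk k -> nk k -> kMor L) (m : nk k) :
  inf_path y -> inf_path z ->
  (forall r, y (zk k) (addk r m) = z (zk k) (addk r m)) -> path_eq y z.
Proof.
move=> [yd yid yc] [zd zid zc] h p q pq.
set Q := addk q m.
have pQ : lek p Q := lekD m pq.
have qQ : lek q Q := lekDr q m.
have [ya yb] := yc _ _ _ (lek0 p) pQ. have [za zb] := zc _ _ _ (lek0 p) pQ.
have [_ e1] := fact_uniq ya za (etrans yb (etrans (h q) (esym zb)))
  (etrans (yd _ _ (lek0 p)) (esym (zd _ _ (lek0 p))))
  (etrans (yd _ _ pQ) (esym (zd _ _ pQ))).
have [yc1 yc2] := yc _ _ _ pq qQ. have [zc1 zc2] := zc _ _ _ pq qQ.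
have [e2 _] := fact_uniq yc1 zc1 (etrans yc2 (etrans e1 (esym zc2)))
  (etrans (yd _ _ pq) (esym (zd _ _ pq)))
  (etrans (yd _ _ qQ) (esym (zd _ _ qQ))).
exact e2.
Qed.

Theorem proposition4p3 (k : nat) (hk : (0 < k)%N) (L : kgraph k)
  (hrf : row_finite L) (hns : no_sources L)
  (C : numClosedFieldType) (H : lmodType C) (ip : H -> H -> C)
  (hip : inner_product ip)
  (I : Type) (e : I -> H) (honb : orthonormal_basis ip e)
  (t tstar : kMor L -> H -> H) (hrep : ck_rep ip t tstar)
  (J K : kMor L -> I -> Prop) (sig : kMor L -> I -> I)
  (hperm : permutative e t tstar J K sig)
  (E : I -> nk k -> nk k -> kMor L) (hE : encoding K E) :
  (* (a) *)
  (forall (i : I) (n : nk k), exists! p : kMor L * I,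
      [/\ kdeg p.1 = n, J p.1 p.2 & sig p.1 p.2 = i]) /\
  (forall l i, K l i -> sig l (tsig_n J sig (kdeg l) i) = i) /\
  (forall l i, J l i -> tsig_n J sig (kdeg l) (sig l i) = i) /\
  (* (b) *)
  (forall l i, J l i ->
      path_range (E i) = ks l /\ path_eq (path_prefix l (E i)) (E (sig l i))) /\
  (forall n i, path_eq (path_shift n (E i)) (E (tsig_n J sig n i))).
Proof.
case: hperm => hbij [ha1 ha2] hb hc [hd1 hd2].
have ip00 : ip 0%R 0%R = 0%R.
  case: hip => hlin _ _ _.
  have := hlin 1%R 0%R 0%R 0%R.
  rewrite scaler0 addr0 mul1r => /eqP; rewrite eq_sym -subr_eq0 addrK => /eqP //.
have U : forall l l' j j', kdeg l = kdeg l' -> J l j -> J l' j' ->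
    sig l j = sig l' j' -> l = l' /\ j = j'.
  move=> l l' j j' hd hj hj' hs.
  case: (eqVneq l l') => [el|nel].
    subst l'; split => //; exact: (hbij l).2.1 _ _ hj hj' hs.
  exfalso.
  have Kl' : K l' (sig l j) by rewrite hs; exact: (hbij l').1 _ hj'.
  have nel' : l' <> l by move=> E'; rewrite E' eqxx in nel.
  have h0 := hd2 l l' (sig l j) nel' (esym hd) Kl'.
  rewrite hd1 // in h0.
  have := honb.1 j j erefl; rewrite h0 ip00 => /eqP; by rewrite eq_sym oner_eq0.
have KU : forall l l' i, K l i -> K l' i -> kdeg l = kdeg l' -> l = l'.
  move=> l l' i Kl Kl' hd.
  have [j [Jj sj]] := (hbij l).2.2 i Kl.
  have [j' [Jj' sj']] := (hbij l').2.2 i Kl'.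
  by have [] := U l l' j j' hd Jj Jj' (etrans sj (esym sj')).
have PR : forall l i, J l i -> kr (E i (zk k) (zk k)) = ks l.
  move=> l i Jli.
  have [[_ hid _] hK] := hE i.
  have [_ K0] := hK (zk k).
  rewrite hid in K0.
  set v := kr (E i (zk k) (zk k)) in K0 *.
  set w := ks l.
  have Jw : J (kid w) i.
    have [_ [hJ _]] := hb l (kid w) (kr_id _).
    by rewrite -hJ /w kid_r.
  have Kw' : K (kid w) (sig (kid w) i) := (hbij _).1 _ Jw.
  have [hKJ [_ hs]] := hb (kid w) (kid w) (etrans (kr_id _) (esym (ks_id _))).
  have ww : kcomp (kid w) (kid w) = kid w.
    by have := kid_l (kid w); rewrite kr_id.
  have e1 := hs i Jw. rewrite ww in e1.
  have e2 := (hbij (kid w)).2.1 _ _ (hKJ _ Kw') Jw e1.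
  rewrite e2 in Kw'.
  have := KU _ _ _ K0 Kw' (etrans (kdeg_id _) (esym (kdeg_id _))).
  by move/(congr1 (@kr _ L)); rewrite !kr_id.
have CC : forall l i, J l i ->
    (forall r, E (sig l i) (zk k) (addk r (kdeg l)) = kcomp l (E i (zk k) r)) /\
    E (sig l i) (zk k) (kdeg l) = l /\
    path_eq (path_shift (kdeg l) (E (sig l i))) (E i).
  move=> l i Jli.
  set j := sig l i.
  have [[idg iid icp] iK] := hE i.
  have [[jdg jid jcp] jK] := hE j.
  have krE : forall r, kr (E i (zk k) r) = ks l.
    move=> r; have [h1 h2] := icp _ _ _ (lek0 (zk k)) (lek0 r).
    by rewrite -(PR _ _ Jli) -h2 kr_comp.
  have Klj : K l j := (hbij l).1 _ Jli.
  have E1 : forall r, E j (zk k) (addk r (kdeg l)) = kcomp l (E i (zk k) r).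
    move=> r.
    have [dr Kr] := iK r.
    have [i' [Ji' si']] := (hbij _).2.2 i Kr.
    have [_ [hJ hs]] := hb l _ (krE r).
    have Kc : K (kcomp l (E i (zk k) r)) j.
      have := hs i' Ji'; rewrite si' /j => ->.
      apply: ((hbij (kcomp l (E i (zk k) r))).1 i'); by rewrite hJ.
    apply: (KU _ _ j (jK _).2 Kc).
    by rewrite (jK _).1 kdeg_comp ?krE // dr addkC.
  have E2 : E j (zk k) (kdeg l) = l.
    by have := E1 (zk k); rewrite add0k iid (PR _ _ Jli) kid_r.
  split => //; split => //.
  move=> p q pq; rewrite /path_shift.
  have [a1 a2] := jcp _ _ _ (lek0 (addk p (kdeg l))) (lekDD (kdeg l) pq).
  have [b1 b2] := icp _ _ _ (lek0 p) pq.
  rewrite !E1 in a1 a2.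
  rewrite -b2 -(kcompA (esym (krE p)) b1) in a2.
  have b1' : ks (kcomp l (E i (zk k) p)) = kr (E i p q).
    by rewrite ks_comp ?krE.
  have dd : kdeg (E j (addk p (kdeg l)) (addk q (kdeg l))) = kdeg (E i p q).
    by rewrite jdg ?lekDD // subkDD idg.
  by have [_ ->] := fact_uniq a1 b1' a2 erefl dd.
have TS : forall n i, exists l, kdeg l = n /\ J l (tsig_n J sig n i) /\ sig l (tsig_n J sig n i) = i.
  move=> n i; rewrite /tsig_n; eapply epsilon_spec.
  have [l [dl Kl]] := ha2 n i.
  have [j [Jj sj]] := (hbij l).2.2 i Kl.
  by exists j, l.
split.
  move=> i n.
  have [l [dl Kl]] := ha2 n i.
  have [j [Jj sj]] := (hbij l).2.2 i Kl.
  exists (l, j); split; first by split.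
  move=> [l' j'] [/= dl' Jj' sj'].
  by have [-> ->] := U l l' j j' (etrans dl (esym dl')) Jj Jj' (etrans sj (esym sj')).
split.
  move=> l i Kli.
  have [l' [dl' [J' s']]] := TS (kdeg l) i.
  have [j [Jj sj]] := (hbij l).2.2 i Kli.
  have [el ej] := U _ _ _ _ dl' J' Jj (etrans s' (esym sj)).
  by rewrite el in s'.
split.
  move=> l i Jli.
  have [l' [dl' [J' s']]] := TS (kdeg l) (sig l i).
  by have [_ ej] := U _ _ _ _ dl' J' Jli s'.
split.
  move=> l i Jli; split; first exact: PR.
  have [E1 [E2 E3]] := CC l i Jli.
  set y := path_prefix l (E i).
  have Py : inf_path y /\ y (zk k) (kdeg l) = l /\ path_eq (path_shift (kdeg l) y) (E i).
    rewrite /y /path_prefix; eapply epsilon_spec; exists (E (sig l i)).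
    by split; [exact: (hE _).1 | split].
  case: Py => [yip [y0 ysh]].
  apply: (path_eq_ext (m := kdeg l) yip (hE _).1) => r.
  rewrite E1.
  case: (yip) => _ _ ycp.
  have [c1 c2] := ycp _ _ _ (lek0 (kdeg l)) (lekDl (kdeg l) r).
  rewrite -c2 y0; congr kcomp.
  by have := ysh _ _ (lek0 r); rewrite /path_shift add0k => ->.
move=> n i.
have [l [dl [Jl sl]]] := TS n i.
have [_ [_ E3]] := CC l _ Jl.
by rewrite sl dl in E3.
Qed.
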